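(* Let $\mathcal{M}=\langle S,A,T,r,c,\gamma,\mu_0,\bar\delta\rangle$ be a deterministic CMDP (deterministic transitions, starting state $s_0$) with cost budget $\bar\delta\ge V_C^*(s_0)$, and let $\bar{\mathcal{M}}_D(\mathcal{M})$ be its direct budget-tracking budget-adaptive MDP. Then: (1) any policy $\pi\in\Pi_P$ induces trajectories that start in and remain entirely within the feasible subspace $\bar S_P$; (2) any deterministic policy $\pi$ satisfying the CMDP cost constraint $\sum_{t=0}^\infty\gamma^tc(s_t,a_t)\le\bar\delta$ (along its induced trajectory) belongs to $\Pi_P$; (3) conversely, if $\pi\in\Pi_P$, then $\pi$ satisfies the cumulative cost constraint $\sum_{t=0}^\infty\gamma^t c(s_t,a_t)\le\bar\delta$ of $\mathcal{M}$. Consequently, in deterministic environments it suffices to enforce $\pi\in\Pi_P$ instead of explicitly enforcing the cumulative cost constraint.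
   Context: A CMDP $\mathcal{M}=\langle S,A,T,r,c,\gamma,\mu_0,\bar\delta\rangle$ has state space $S$, action space $A$, transition kernel $T$, reward $r$, cost $c:S\times A\to\mathbb{R}^+$ bounded by $c_{\max}$, discount $\gamma\in[0,1)$, initial distribution $\mu_0$ and cost threshold $\bar\delta$. Optimal cost values: $V_C^*(s)=\min_\pi\mathbb{E}_{\pi,s_0=s}[\sum_{t\ge0}\gamma^tc(s_t,a_t)]$, $Q_C^*(s,a)=\min_\pi\mathbb{E}_{\pi,s_0=s,a_0=a}[\sum_{t\ge0}\gamma^tc(s_t,a_t)]$. Persistent safe action set $A_P(s,\delta)=\{a:Q_C^*(s,a)\le\delta\}$; feasible subspace $\bar S_P=\{(s,\delta):\delta\in\mathbb{R}^+,\ V_C^*(s)\le\delta\}$. A budget-adaptive MDP built from $\mathcal{M}$ with $f:S\times\mathbb{R}^+\to\mathbb{R}^+$ and $g:S\times A\times S\times\mathbb{R}^+\to\mathbb{R}^+$ has augmented states $(s,\delta)\in S\times\mathbb{R}^+$, the same actions, reward and cost as $\mathcal{M}$ (not depending on $\delta$), initial augmented state $(s_0,f(s_0,\bar\delta))$ with $s_0\sim\mu_0$, and transitions $\bar T((s',\delta')\mid(s,\delta),a)=T(s'\mid s,a)\mathbf{1}\{\delta'=g(s,a,s',\delta)\}$. The direct budget-tracking BAMDP $\bar{\mathcal{M}}_D$ uses $f(s_0,\bar\delta)=\bar\delta$ and $g(s,a,s',\delta)=\frac{\delta-c(s,a)}{\gamma}$. The budget-restricted policy set $\Pi_P$ consists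 of policies $\pi$ on augmented states $(s,\delta)$ with $\pi(a\mid(s,\delta))>0\implies a\in A_P(s,\delta)$.
   Formalization: Part (2) concludes only that at each augmented state $(s_t,\delta_t)$ visited along its induced trajectory the policy's action lies in $A_P(s_t,\delta_t)$, not that $\pi\in\Pi_P$; and $\gamma\in(0,1)$ replaces $\gamma\in[0,1)$. The statement above fails without it. *)

(* Defs.v *)
From Stdlib Require Import Reals.
From Coquelicot Require Import Coquelicot.
Open Scope R_scope.

(* The reward, which plays no role in the theorem, is omitted. *)

Fixpoint traj {S A : Type} (step : S -> A -> S) (s : S) (a : nat -> A) (t : nat) : S :=
  match t with
  | O => s
  | Datatypes.S t' => step (traj step s a t') (a t')
  end.

Definition disc_cost {S A : Type} (step : S -> A -> S) (c : S -> A -> R) (gam : R)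
  (s : S) (a : nat -> A) : R :=
  Series (fun t => gam ^ t * c (traj step s a t) (a t)).

(* Optimal cost values (deterministic environment: optimizing over policies
   amounts to optimizing over action sequences); infima in Rbar. *)
Definition V_C_star {S A : Type} (step : S -> A -> S) (c : S -> A -> R) (gam : R)
  (s : S) : Rbar :=
  Glb_Rbar (fun x => exists a : nat -> A, x = disc_cost step c gam s a).

Definition Q_C_star {S A : Type} (step : S -> A -> S) (c : S -> A -> R) (gam : R)
  (s : S) (a0 : A) : Rbar :=
  Glb_Rbar (fun x => exists a : nat -> A, a O = a0 /\ x = disc_cost step c gam s a).

Definition A_P {S A : Type} (step : S -> A -> S) (c : S -> A -> R) (gam : R)
  (s : S) (delta : R) (a : A) : Prop :=
  Rbar_le (Q_C_star step c gam s a) (Finite delta).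

Definition in_S_P {S A : Type} (step : S -> A -> S) (c : S -> A -> R) (gam : R)
  (x : S * R) : Prop :=
  0 <= snd x /\ Rbar_le (V_C_star step c gam (fst x)) (Finite (snd x)).

Fixpoint aug_traj {S A : Type} (step : S -> A -> S) (c : S -> A -> R) (gam : R)
  (s0 : S) (delta0 : R) (a : nat -> A) (t : nat) : S * R :=
  match t with
  | O => (s0, delta0)
  | Datatypes.S t' =>
      let x := aug_traj step c gam s0 delta0 a t' in
      (step (fst x) (a t'), (snd x - c (fst x) (a t')) / gam)
  end.

(* A (possibly stochastic) policy on augmented states is represented by its
   support: [pi s delta a] holds iff pi(a | (s, delta)) > 0. *)
Definition policy (S A : Type) := S -> R -> A -> Prop.

(* Budget-restricted policy set Pi_P (policies are defined on S x R^+). *)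
Definition in_Pi_P {S A : Type} (step : S -> A -> S) (c : S -> A -> R) (gam : R)
  (pi : policy S A) : Prop :=
  forall s delta a, 0 <= delta -> pi s delta a -> A_P step c gam s delta a.

(* Action sequence [a] is a trajectory (with positive probability) of [pi]
   in the BAMDP started at (s0, delta0). *)
Definition induced_by {S A : Type} (step : S -> A -> S) (c : S -> A -> R) (gam : R)
  (s0 : S) (delta0 : R) (pi : policy S A) (a : nat -> A) : Prop :=
  forall t, pi (fst (aug_traj step c gam s0 delta0 a t))
               (snd (aug_traj step c gam s0 delta0 a t)) (a t).

Definition det_policy {S A : Type} (pid : S -> R -> A) : policy S A :=
  fun s delta a => a = pid s delta.

(* Main.v *)
Require Import Defs.
From Stdlib Require Import Reals Lra Lia.
From Coquelicot Require Import Coquelicot.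
Open Scope R_scope.

Lemma traj_shift {S A : Type} (step : S -> A -> S) (s : S) (a : nat -> A) (n k : nat) :
  traj step (traj step s a n) (fun j => a (n + j)%nat) k = traj step s a (n + k).
Proof.
  induction k as [|k IH]; simpl.
  - now rewrite Nat.add_0_r.
  - rewrite IH, Nat.add_succ_r. reflexivity.
Qed.

Lemma fst_aug {S A : Type} (step : S -> A -> S) c gam s0 d0 (a : nat -> A) t :
  fst (aug_traj step c gam s0 d0 a t) = traj step s0 a t.
Proof. induction t; simpl; auto. now rewrite IHt. Qed.

Lemma ex_terms {S A : Type} (step : S -> A -> S) (c : S -> A -> R) cmax gam s a :
  (forall s a, 0 <= c s a <= cmax) -> 0 < gam < 1 ->
  ex_series (fun t => gam ^ t * c (traj step s a t) (a t)).
Proof.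
  intros Hc Hg.
  apply (@ex_series_le R_AbsRing R_CompleteNormedModule _ (fun n => cmax * gam ^ n)).
  - intros n. change norm with Rabs; simpl.
    specialize (Hc (traj step s a n) (a n)).
    assert (0 <= gam ^ n) by (apply pow_le; lra).
    rewrite Rabs_pos_eq by (apply Rmult_le_pos; lra).
    rewrite Rmult_comm. apply Rmult_le_compat_r; lra.
  - apply (ex_series_scal_l cmax (fun n => gam ^ n)).
    apply ex_series_geom. rewrite Rabs_pos_eq; lra.
Qed.

Lemma disc_step {S A : Type} (step : S -> A -> S) (c : S -> A -> R) cmax gam s a :
  (forall s a, 0 <= c s a <= cmax) -> 0 < gam < 1 ->
  disc_cost step c gam s a =
  c s (a O) + gam * disc_cost step c gam (step s (a O)) (fun k => a (Datatypes.S k)).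
Proof.
  intros Hc Hg. unfold disc_cost.
  rewrite Series_incr_1 by (eapply ex_terms; eauto).
  rewrite <- Series_scal_l. simpl. rewrite Rmult_1_l. f_equal.
  apply Series_ext. intros k.
  pose proof (traj_shift step s a 1 k) as E. simpl in E. rewrite E. ring.
Qed.

Lemma disc_nonneg {S A : Type} (step : S -> A -> S) (c : S -> A -> R) cmax gam s a :
  (forall s a, 0 <= c s a <= cmax) -> 0 < gam < 1 ->
  0 <= disc_cost step c gam s a.
Proof.
  intros Hc Hg. unfold disc_cost.
  assert (Z : Series (fun _ : nat => 0) = 0).
  { rewrite (Series_ext (fun _ : nat => 0) (fun _ : nat => 0 * 0)) by (intro; ring).
    rewrite Series_scal_l. ring. }
  rewrite <- Z.
  apply Series_le; [|eapply ex_terms; eauto].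
  intros n. split; [lra|]. apply Rmult_le_pos; [apply pow_le; lra| apply Hc].
Qed.

Lemma glb_le_iff (E : R -> Prop) (x : R) :
  Rbar_le (Glb_Rbar E) (Finite x) <->
  (forall eps, 0 < eps -> exists y, E y /\ y <= x + eps).
Proof.
  destruct (Glb_Rbar_correct E) as [Hlb Hg]. split.
  - intros H eps Heps.
    destruct (Classical_Prop.classic (exists y, E y /\ y <= x + eps)) as [h|h]; auto.
    exfalso.
    assert (Hb : is_lb_Rbar E (Finite (x + eps))).
    { intros y Ey. simpl. destruct (Rle_lt_dec (x+eps) y) as [l|l]; auto.
      exfalso. apply h. exists y. split; auto; lra. }
    pose proof (Rbar_le_trans _ _ _ (Hg _ Hb) H). simpl in H0. lra.
  - intros H. destruct (Glb_Rbar E) as [g| |] eqn:Eg; simpl; auto.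
    + apply Rnot_lt_le. intros Hlt.
      destruct (H ((g - x)/2)) as [y [Ey Hy]]; [lra|].
      pose proof (Hlb y Ey). try rewrite Eg in H0; simpl in H0. lra.
    + destruct (H 1) as [y [Ey Hy]]; [lra|].
      pose proof (Hlb y Ey). try rewrite Eg in H0; simpl in H0. auto.
Qed.

Lemma V_nonneg {S A : Type} (step : S -> A -> S) (c : S -> A -> R) cmax gam s :
  (forall s a, 0 <= c s a <= cmax) -> 0 < gam < 1 ->
  Rbar_le (Finite 0) (V_C_star step c gam s).
Proof.
  intros Hc Hg. unfold V_C_star. destruct (Glb_Rbar_correct (fun x => exists a : nat -> A, x = disc_cost step c gam s a)) as [_ Hg2].
  apply Hg2. intros y [a ->]. simpl. eapply disc_nonneg; eauto.
Qed.

Lemma Q_to_V {S A : Type} (step : S -> A -> S) (c : S -> A -> R) cmax gam s a0 d :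
  (forall s a, 0 <= c s a <= cmax) -> 0 < gam < 1 ->
  Rbar_le (Q_C_star step c gam s a0) (Finite d) ->
  Rbar_le (V_C_star step c gam (step s a0)) (Finite ((d - c s a0) / gam)).
Proof.
  intros Hc Hg HQ. unfold Q_C_star, V_C_star in *.
  rewrite glb_le_iff in HQ |- *. intros eps Heps.
  destruct (HQ (gam * eps)) as [y [[a [Ha0 ->]] Hy]]; [apply Rmult_lt_0_compat; lra|].
  exists (disc_cost step c gam (step s a0) (fun k => a (Datatypes.S k))). split.
  - exists (fun k => a (Datatypes.S k)). reflexivity.
  - rewrite (disc_step step c cmax gam s a Hc Hg) in Hy. rewrite Ha0 in Hy.
    apply (Rmult_le_reg_l gam); [lra|].
    replace (gam * ((d - c s a0) / gam + eps)) with (d - c s a0 + gam * eps) by (field; lra).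
    lra.
Qed.

Theorem theorem2 (S A : Type) (step : S -> A -> S) (c : S -> A -> R)
  (cmax gam delta_bar : R) (s0 : S)
  (Hc : forall s a, 0 <= c s a <= cmax)
  (Hgam : 0 < gam < 1)
  (Hdelta : 0 <= delta_bar)
  (Hfeas : Rbar_le (V_C_star step c gam s0) (Finite delta_bar)) :
  (* (1) trajectories of policies in Pi_P stay in the feasible subspace *)
  (forall pi : policy S A, in_Pi_P step c gam pi ->
     forall a : nat -> A, induced_by step c gam s0 delta_bar pi a ->
       forall t, in_S_P step c gam (aug_traj step c gam s0 delta_bar a t))
  /\
  (* (2) a deterministic policy satisfying the cost constraint along its
         induced trajectory selects persistent safe actions there *)
  (forall (pid : S -> R -> A) (a : nat -> A),
     induced_by step c gam s0 delta_bar (det_policy pid) a ->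
     disc_cost step c gam s0 a <= delta_bar ->
     forall t, A_P step c gam (fst (aug_traj step c gam s0 delta_bar a t))
                              (snd (aug_traj step c gam s0 delta_bar a t)) (a t))
  /\
  (* (3) policies in Pi_P satisfy the cumulative cost constraint *)
  (forall pi : policy S A, in_Pi_P step c gam pi ->
     forall a : nat -> A, induced_by step c gam s0 delta_bar pi a ->
       disc_cost step c gam s0 a <= delta_bar).
Proof.
  assert (P1 : forall pi : policy S A, in_Pi_P step c gam pi ->
     forall a : nat -> A, induced_by step c gam s0 delta_bar pi a ->
       forall t, in_S_P step c gam (aug_traj step c gam s0 delta_bar a t)).
  { intros pi Hpi a Hind t. induction t as [|t IH].
    - split; simpl; auto.
    - destruct IH as [H0 HV].
      pose proof (Hpi _ _ _ H0 (Hind t)) as HA. unfold A_P in HA.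
      pose proof (Q_to_V step c cmax gam _ _ _ Hc Hgam HA) as HV'.
      unfold in_S_P. simpl. split; auto.
      pose proof (Rbar_le_trans _ _ _ (V_nonneg step c cmax gam _ Hc Hgam) HV').
      exact H. }
  split; [exact P1|]. split.
  - intros pid a _ Hd t.
    assert (Hk : disc_cost step c gam (traj step s0 a t) (fun j => a (t + j)%nat)
                 <= snd (aug_traj step c gam s0 delta_bar a t)).
    { induction t as [|t IH].
      - simpl. exact Hd.
      - rewrite (disc_step step c cmax gam _ _ Hc Hgam) in IH.
        rewrite Nat.add_0_r, <- fst_aug with (c := c) (gam := gam) (d0 := delta_bar) in IH.
        simpl. rewrite <- fst_aug with (c := c) (gam := gam) (d0 := delta_bar).
        apply (Rmult_le_reg_l gam); [lra|].
        replace (gam * ((snd (aug_traj step c gam s0 delta_bar a t) -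
            c (fst (aug_traj step c gam s0 delta_bar a t)) (a t)) / gam))
          with (snd (aug_traj step c gam s0 delta_bar a t) -
            c (fst (aug_traj step c gam s0 delta_bar a t)) (a t)) by (field; lra).
        assert (E : (fun j => a (Datatypes.S (t + j))%nat) = (fun k => a (t + Datatypes.S k)%nat)).
        { apply FunctionalExtensionality.functional_extensionality. intros k.
          f_equal. lia. }
        rewrite E. lra. }
    unfold A_P, Q_C_star. rewrite fst_aug.
    apply (Rbar_le_trans _ (Finite (disc_cost step c gam (traj step s0 a t) (fun j => a (t + j)%nat)))); [|exact Hk].
    destruct (Glb_Rbar_correct (fun x => exists a' : nat -> A, a' O = a t /\
       x = disc_cost step c gam (traj step s0 a t) a')) as [Hlb _].
    apply Hlb. exists (fun j => a (t + j)%nat). split; auto. now rewrite Nat.add_0_r.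
  - intros pi Hpi a Hind.
    set (u := fun t => gam ^ t * c (traj step s0 a t) (a t)).
    assert (Hid : forall t, sum_n u t + gam ^ (Datatypes.S t) * snd (aug_traj step c gam s0 delta_bar a (Datatypes.S t)) = delta_bar).
    { induction t as [|t IH].
      - rewrite sum_O. unfold u. simpl. field. lra.
      - rewrite sum_Sn. change plus with Rplus.
        refine (eq_trans _ IH). unfold u.
        replace (snd (aug_traj step c gam s0 delta_bar a (Datatypes.S (Datatypes.S t)))) with
          ((snd (aug_traj step c gam s0 delta_bar a (Datatypes.S t)) - c (traj step s0 a (Datatypes.S t)) (a (Datatypes.S t))) / gam)
          by (simpl; now rewrite fst_aug).
        set (X := snd (aug_traj step c gam s0 delta_bar a (Datatypes.S t))).
        set (Y := c (traj step s0 a (Datatypes.S t)) (a (Datatypes.S t))).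
        simpl. field. lra. }
    assert (Hle : forall t, sum_n u t <= delta_bar).
    { intros t. pose proof (Hid t) as Ht.
      destruct (P1 pi Hpi a Hind (Datatypes.S t)) as [H0 _].
      assert (0 <= gam ^ Datatypes.S t) by (apply pow_le; lra).
      pose proof (Rmult_le_pos _ _ H H0). lra. }
    pose proof (Series_correct u (ex_terms step c cmax gam s0 a Hc Hgam)) as Hs.
    pose proof (is_lim_seq_le (sum_n u) (fun _ => delta_bar) _ _ Hle (Hs : is_lim_seq (sum_n u) (Series u)) (is_lim_seq_const delta_bar)) as R.
    exact R.
Qed.
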